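(* Let $\Gamma$ be a maximal consistent set of SBTrust and let $\delta,\psi$ be propositional formulas. Then $\delta\rightsquigarrow\psi\in\Gamma$ if and only if $\psi\in\Delta$ for every $(\Delta,\varphi,i)\in\mathit{max}([\delta]_\Gamma)$.
   Context: $\mathcal{L}_T$: $\alpha::=\varphi\mid\varphi\rightsquigarrow\varphi\mid B(\alpha)\mid\alpha*\alpha\mid\neg\alpha$, with $\varphi$ ranging over classical propositional formulas (set $\mathcal{L}_{CL}$) and $*\in\{\land,\lor,\to,\leftrightarrow\}$. SBTrust is the Hilbert system ($\varphi,\psi,\chi,\varphi_i,\psi_i$ propositional; $\alpha,\beta\in\mathcal{L}_T$; rule outputs in $\mathcal{L}_T$): classical tautologies and Modus Ponens; $\varphi\rightsquigarrow\varphi$; $(\varphi\rightsquigarrow\bot)\to\neg\varphi$; $((\psi\land\chi)\rightsquigarrow\varphi)\to(\psi\rightsquigarrow(\chi\to\varphi))$; $(\neg(\varphi\leftrightarrow\psi)\rightsquigarrow\bot)\to((\varphi\rightsquigarrow\chi)\leftrightarrow(\psi\rightsquigarrow\chi))$; rule RCK: from $(\varphi_1\land\dots\land\varphi_n)\to\varphi_{n+1}$ infer $\bigwedge_{j\le n}(\psi\rightsquigarrow\varphi_j)\to(\psi\rightsquigarrow\varphi_{n+1})$; rule $\mathbf{S5_F}$: from $(\ell_1\land\dots\land\ell_n)\to\chi$ infer $(\ell_1\land\dots\land\ell_n)\to(\neg\chi\rightsquigarrow\bot)$, each $\ell_j$ being $\varphi_j\rightsquigarrow\psi_j$ or its negation,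 $\chi$ propositional; $B(\alpha\to\beta)\to(B\alpha\to B\beta)$; $B\alpha\to\neg B\neg\alpha$; $B\alpha\to BB\alpha$; necessitation for $B$. A maximal consistent set (MCS) is $\Gamma\subseteq\mathcal{L}_T$ with $\Gamma\nvdash\bot$ and, for each $\alpha$, $\alpha\in\Gamma$ or $\neg\alpha\in\Gamma$. For MCSs, $\Gamma\leftrightsquigarrow\Delta$ iff they contain the same formulas of the form $\chi\rightsquigarrow\psi$; $[\Gamma]_\leftrightsquigarrow$ is the equivalence class. $\rightsquigarrow_\varphi(\Gamma)=\{\psi:\varphi\rightsquigarrow\psi\in\Gamma\}$, and $\Delta$ is $\varphi$-likely for $\Gamma$ if $\rightsquigarrow_\varphi(\Gamma)\subseteq\Delta$. Let $S_\Gamma=[\Gamma]_\leftrightsquigarrow\times\mathcal{L}_{CL}\times\{0,1,2\}$ and $[\delta]_\Gamma=\{(\Delta,\varphi,i)\in S_\Gamma:\delta\in\Delta\}$. Define $\succeq_\Gamma\subseteq S_\Gamma\times S_\Gamma$ by: $(\Delta,\varphi,i)\succeq_\Gamma(\Omega,\psi,j)$ iff ($\Delta$ is $\varphi$-likely for $\Gamma$ and $\varphi\in\Omega$) or ($i=1,j=0$) or ($i=2,j=1$) or ($i=0,j=2$). For $X\subseteq S_\Gamma$, $\mathit{max}(X)=\{x\in X:\forall y\in X\,(y\succeq_\Gamma x\Rightarrow x\succeq_\Gamma y)\}$. *)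

(* Defs.v *)
From Stdlib Require Import List Bool.
Import ListNotations.

Inductive pform : Type :=
| PVar : nat -> pform
| PBot : pform
| PNeg : pform -> pform
| PAnd : pform -> pform -> pform
| POr  : pform -> pform -> pform
| PImp : pform -> pform -> pform
| PIff : pform -> pform -> pform.

Definition PTop : pform := PNeg PBot.

Inductive tform : Type :=
| TProp : pform -> tform
| TCond : pform -> pform -> tform
| TB    : tform -> tform
| TNeg  : tform -> tform
| TAnd  : tform -> tform -> tform
| TOr   : tform -> tform -> tform
| TImp  : tform -> tform -> tform
| TIff  : tform -> tform -> tform.

Definition TBot : tform := TProp PBot.

Fixpoint peval (v : nat -> bool) (p : pform) : bool :=
  match p with
  | PVar n => v n
  | PBot => false
  | PNeg a => negb (peval v a)
  | PAnd a b => peval v a && peval v b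
  | POr a b => peval v a || peval v b
  | PImp a b => implb (peval v a) (peval v b)
  | PIff a b => eqb (peval v a) (peval v b)
  end.

Fixpoint teval (v : nat -> bool) (w : tform -> bool) (a : tform) : bool :=
  match a with
  | TProp p => peval v p
  | TCond _ _ => w a
  | TB _ => w a
  | TNeg x => negb (teval v w x)
  | TAnd x y => teval v w x && teval v w y
  | TOr x y => teval v w x || teval v w y
  | TImp x y => implb (teval v w x) (teval v w y)
  | TIff x y => eqb (teval v w x) (teval v w y)
  end.

(** Instances (in L_T) of classical tautologies. *)
Definition tautology (a : tform) : Prop :=
  forall v w, teval v w a = true.

Fixpoint pbigand (l : list pform) : pform :=
  match l with
  | [] => PTop
  | [p] => p
  | p :: l' => PAnd p (pbigand l')
  end.

Fixpoint tbigand (l : list tform) : tform :=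
  match l with
  | [] => TProp PTop
  | [a] => a
  | a :: l' => TAnd a (tbigand l')
  end.

Definition lit_form (l : bool * pform * pform) : tform :=
  match l with
  | (true, p, q) => TCond p q
  | (false, p, q) => TNeg (TCond p q)
  end.

Inductive thm : tform -> Prop :=
| ax_taut : forall a, tautology a -> thm a
| rule_mp : forall a b, thm (TImp a b) -> thm a -> thm b
| ax_id : forall p, thm (TCond p p)
| ax_bot : forall p, thm (TImp (TCond p PBot) (TProp (PNeg p)))
| ax_exp : forall p q r,
    thm (TImp (TCond (PAnd q r) p) (TCond q (PImp r p)))
| ax_lle : forall p q r,
    thm (TImp (TCond (PNeg (PIff p q)) PBot)
              (TIff (TCond p r) (TCond q r)))
| rule_rck : forall (l : list pform) (p q : pform),
    thm (TProp (PImp (pbigand l) p)) ->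
    thm (TImp (tbigand (map (fun x => TCond q x) l)) (TCond q p))
| rule_s5f : forall (ls : list (bool * pform * pform)) (chi : pform),
    thm (TImp (tbigand (map lit_form ls)) (TProp chi)) ->
    thm (TImp (tbigand (map lit_form ls)) (TCond (PNeg chi) PBot))
| ax_K : forall a b, thm (TImp (TB (TImp a b)) (TImp (TB a) (TB b)))
| ax_D : forall a, thm (TImp (TB a) (TNeg (TB (TNeg a))))
| ax_4 : forall a, thm (TImp (TB a) (TB (TB a)))
| rule_nec : forall a, thm a -> thm (TB a).

Fixpoint imps (l : list tform) (a : tform) : tform :=
  match l with
  | [] => a
  | b :: l' => TImp b (imps l' a)
  end.

(** Derivability from a set of premises (rules apply to theorems only). *)
Definition derives (G : tform -> Prop) (a : tform) : Prop :=
  exists l : list tform, (forall b, In b l -> G b) /\ thm (imps l a).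

Definition MCS (G : tform -> Prop) : Prop :=
  ~ derives G TBot /\ forall a, G a \/ G (TNeg a).

Definition same_cond (G D : tform -> Prop) : Prop :=
  forall p q, G (TCond p q) <-> D (TCond p q).

Definition likely (G : tform -> Prop) (p : pform) (D : tform -> Prop) : Prop :=
  forall q, G (TCond p q) -> D (TProp q).

Inductive idx3 : Type := I0 | I1 | I2.

Definition sel : Type := ((tform -> Prop) * pform * idx3)%type.

Definition in_S (G : tform -> Prop) (x : sel) : Prop :=
  let '(D, _, _) := x in MCS D /\ same_cond G D.

Definition in_box (G : tform -> Prop) (d : pform) (x : sel) : Prop :=
  in_S G x /\ (let '(D, _, _) := x in D (TProp d)).

Definition succeq (G : tform -> Prop) (x y : sel) : Prop :=
  let '(D, p, i) := x in
  let '(W, _, j) := y in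
  (likely G p D /\ W (TProp p))
  \/ (i = I1 /\ j = I0) \/ (i = I2 /\ j = I1) \/ (i = I0 /\ j = I2).

Definition in_max (G : tform -> Prop) (X : sel -> Prop) (x : sel) : Prop :=
  X x /\ forall y, X y -> succeq G y x -> succeq G x y.

(* Main.v *)
Require Import Defs.
From Stdlib Require Import List Bool Classical Cantor Lia.
Import ListNotations.

Lemma teval_imps v w l a : teval v w (imps l a) = true <->
  ((forall x, In x l -> teval v w x = true) -> teval v w a = true).
Proof.
  induction l as [|b l IH]; simpl.
  - split; auto.
  - destruct (teval v w b) eqn:E; simpl; rewrite ?IH; split; intros H.
    + intros H1. apply H. intros x Hx. apply H1; auto.
    + intros H1. apply H. intros x [<-|Hx]; auto.
    + intros H1. exfalso. rewrite (H1 b (or_introl eq_refl)) in E. discriminate.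
    + reflexivity.
Qed.

Lemma teval_tbigand v w l : teval v w (tbigand l) = true <->
  (forall x, In x l -> teval v w x = true).
Proof.
  induction l as [|b l IH].
  - simpl. split; auto.
  - destruct l as [|c l'].
    + simpl. split. intros H x [<-|[]]; auto. intros H; apply H; auto.
    + change (teval v w b && teval v w (tbigand (c :: l')) = true <->
        (forall x, In x (b :: c :: l') -> teval v w x = true)).
      rewrite andb_true_iff, IH. split.
      * intros [H1 H2] x [<-|Hx]; auto.
      * intros H. split; [apply H; left; auto|]. intros x Hx; apply H; right; auto.
Qed.

Lemma peval_pbigand v l : peval v (pbigand l) = true <->
  (forall x, In x l -> peval v x = true).
Proof.
  induction l as [|b l IH].
  - simpl. split; auto.
  - destruct l as [|c l'].
    + simpl. split. intros H x [<-|[]]; auto. intros H; apply H; auto.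
    + change (peval v b && peval v (pbigand (c :: l')) = true <->
        (forall x, In x (b :: c :: l') -> peval v x = true)).
      rewrite andb_true_iff, IH. split.
      * intros [H1 H2] x [<-|Hx]; auto.
      * intros H. split; [apply H; left; auto|]. intros x Hx; apply H; right; auto.
Qed.

Lemma thm_imps ts a : (forall t, In t ts -> thm t) -> thm (imps ts a) -> thm a.
Proof.
  induction ts as [|t ts IH]; simpl; auto.
  intros H1 H2. apply IH; auto. eapply rule_mp; eauto.
Qed.

Lemma thm_sem ts a : (forall t, In t ts -> thm t) ->
  (forall v w, (forall t, In t ts -> teval v w t = true) -> teval v w a = true) -> thm a.
Proof.
  intros H1 H2. apply (thm_imps ts); auto. apply ax_taut. intros v w.
  apply teval_imps. apply H2.
Qed.

Lemma imps_weaken l l' x : thm (imps l x) -> incl l l' -> thm (imps l' x).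
Proof.
  intros H Hi. apply (thm_sem [imps l x]).
  - intros t [<-|[]]; auto.
  - intros v w Ht. apply teval_imps. intros Hl'.
    specialize (Ht _ (or_introl eq_refl)). apply teval_imps in Ht. apply Ht.
    intros y Hy. apply Hl', Hi, Hy.
Qed.

Lemma derives_sem S ks a : (forall b, In b ks -> derives S b) ->
  (forall v w, (forall b, In b ks -> teval v w b = true) -> teval v w a = true) ->
  derives S a.
Proof.
  intros Hks Hsem.
  assert (HL : exists L, (forall b, In b L -> S b) /\ forall b, In b ks -> thm (imps L b)).
  { clear Hsem. induction ks as [|b ks IH].
    - exists []. split; intros ? [].
    - destruct IH as [L [HL1 HL2]]. intros; apply Hks; right; auto.
      destruct (Hks b (or_introl eq_refl)) as [lb [Hlb1 Hlb2]].
      exists (lb ++ L). split.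
      + intros c Hc. apply in_app_or in Hc as [Hc|Hc]; auto.
      + intros c [<-|Hc].
        * eapply imps_weaken; eauto. intros y Hy; apply in_or_app; auto.
        * eapply imps_weaken; eauto. intros y Hy; apply in_or_app; auto. }
  destruct HL as [L [HL1 HL2]]. exists L. split; auto.
  apply (thm_sem (map (fun b => imps L b) ks)).
  - intros t Ht. apply in_map_iff in Ht as [b [<- Hb]]. auto.
  - intros v w Ht. apply teval_imps. intros HLt. apply Hsem. intros b Hb.
    assert (E := Ht (imps L b) (in_map _ _ _ Hb)). rewrite teval_imps in E. auto.
Qed.

Lemma derives_in S a : S a -> derives S a.
Proof.
  intros H. exists [a]. split. intros b [<-|[]]; auto.
  apply ax_taut. intros v w; simpl. destruct (teval v w a); reflexivity.
Qed.

Lemma thm_derives S a : thm a -> derives S a.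
Proof. intros H. exists []. split; auto. intros ? []. Qed.

Lemma derives_mono (S S' : tform -> Prop) a : (forall x, S x -> S' x) -> derives S a -> derives S' a.
Proof. intros H [l [H1 H2]]. exists l; split; auto. Qed.

Lemma mcs_not_both D a : MCS D -> D a -> D (TNeg a) -> False.
Proof.
  intros [Hc _] H1 H2. apply Hc. apply (derives_sem D [a; TNeg a]).
  - intros b [<-|[<-|[]]]; apply derives_in; auto.
  - intros v w H. specialize (H a (or_introl eq_refl)) as Ha.
    specialize (H (TNeg a) (or_intror (or_introl eq_refl))). simpl in H.
    rewrite Ha in H. discriminate.
Qed.

Lemma mcs_closed D a : MCS D -> derives D a -> D a.
Proof.
  intros HD Hd. destruct HD as [Hc Hm] eqn:E. destruct (Hm a) as [H|H]; auto.
  exfalso. apply Hc. apply (derives_sem D [a; TNeg a]).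
  - intros b [<-|[<-|[]]]; auto; apply derives_in; auto.
  - intros v w H'. specialize (H' a (or_introl eq_refl)) as Ha.
    specialize (H' (TNeg a) (or_intror (or_introl eq_refl))). simpl in H'.
    rewrite Ha in H'. discriminate.
Qed.

Fixpoint pcode (p : pform) : nat :=
  match p with
  | PVar n => to_nat (0, n)
  | PBot => to_nat (1, 0)
  | PNeg a => to_nat (2, pcode a)
  | PAnd a b => to_nat (3, to_nat (pcode a, pcode b))
  | POr a b => to_nat (4, to_nat (pcode a, pcode b))
  | PImp a b => to_nat (5, to_nat (pcode a, pcode b))
  | PIff a b => to_nat (6, to_nat (pcode a, pcode b))
  end.

Lemma pcode_inj p p' : pcode p = pcode p' -> p = p'.
Proof.
  revert p'. induction p; destruct p'; cbn [pcode]; intros H;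
  apply to_nat_inj in H; try discriminate; apply (f_equal snd) in H; cbn [snd] in H; auto;
  try (apply to_nat_inj in H;
       pose proof (f_equal fst H) as H1; pose proof (f_equal snd H) as H2; cbn [fst snd] in H1, H2);
  f_equal; auto.
Qed.

Fixpoint tcode (p : tform) : nat :=
  match p with
  | TProp a => to_nat (0, pcode a)
  | TCond a b => to_nat (1, to_nat (pcode a, pcode b))
  | TB a => to_nat (2, tcode a)
  | TNeg a => to_nat (3, tcode a)
  | TAnd a b => to_nat (4, to_nat (tcode a, tcode b))
  | TOr a b => to_nat (5, to_nat (tcode a, tcode b))
  | TImp a b => to_nat (6, to_nat (tcode a, tcode b))
  | TIff a b => to_nat (7, to_nat (tcode a, tcode b))
  end.

Lemma tcode_inj p p' : tcode p = tcode p' -> p = p'.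
Proof.
  revert p'. induction p; destruct p'; cbn [pcode tcode]; intros H;
  apply to_nat_inj in H; try discriminate; apply (f_equal snd) in H; cbn [snd] in H; auto;
  try (apply to_nat_inj in H;
       pose proof (f_equal fst H) as H1; pose proof (f_equal snd H) as H2; cbn [fst snd] in H1, H2);
  f_equal; auto using pcode_inj.
Qed.
Definition cons (S : tform -> Prop) := ~ derives S TBot.

Fixpoint chain (Sg : tform -> Prop) (n : nat) : tform -> Prop :=
  match n with
  | 0 => Sg
  | Datatypes.S n' => fun x => chain Sg n' x \/ exists a, tcode a = n' /\
      ((cons (fun y => chain Sg n' y \/ y = a) /\ x = a) \/
       (~ cons (fun y => chain Sg n' y \/ y = a) /\ x = TNeg a))
  end.

Lemma chain_mono Sg m n x : m <= n -> chain Sg m x -> chain Sg n x.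
Proof.
  induction 1; auto. intros H'. simpl. left; auto.
Qed.

Lemma deduction P a b : derives (fun y => P y \/ y = a) b -> derives P (TImp a b).
Proof.
  intros [l [Hl Ht]].
  assert (Hl' : exists l', (forall c, In c l' -> P c) /\ forall c, In c l -> In c l' \/ c = a).
  { clear Ht. induction l as [|c l IH].
    - exists []. split; intros ? [].
    - destruct IH as [l' [H1 H2]]. intros; apply Hl; right; auto.
      destruct (Hl c (or_introl eq_refl)) as [Hc|Hc].
      + exists (c :: l'). split. intros e [<-|He]; auto.
        intros e [<-|He]. left; left; auto. destruct (H2 e He); auto. left; right; auto.
      + exists l'. split; auto. intros e [<-|He]; auto. }
  destruct Hl' as [l' [H1 H2]]. exists l'. split; auto.
  apply (thm_sem [imps l b]).
  - intros t [<-|[]]; auto.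
  - intros v w Ht'. specialize (Ht' _ (or_introl eq_refl)). rewrite teval_imps in Ht'.
    apply teval_imps. intros Hl'. simpl.
    destruct (teval v w a) eqn:Ea; simpl; auto.
    apply Ht'. intros x Hx. destruct (H2 x Hx) as [Hx' | ->]; auto.
Qed.

Lemma cons_step P a : cons P -> cons (fun y => P y \/ y = a) \/ cons (fun y => P y \/ y = TNeg a).
Proof.
  intros HP. destruct (classic (cons (fun y => P y \/ y = a))) as [H|H]; [left; auto|right].
  intros H2. apply HP. unfold cons in H. apply NNPP in H.
  apply deduction in H. apply deduction in H2.
  apply (derives_sem P [TImp a TBot; TImp (TNeg a) TBot]).
  - intros c [<-|[<-|[]]]; auto.
  - intros v w Hv. specialize (Hv _ (or_introl eq_refl)) as H3.
    specialize (Hv _ (or_intror (or_introl eq_refl))). simpl in *.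
    destruct (teval v w a); simpl in *; auto.
Qed.

Lemma chain_cons Sg n : cons Sg -> cons (chain Sg n).
Proof.
  intros H0. induction n as [|n IH]; auto.
  destruct (classic (exists a, tcode a = n)) as [[a Ha]|Hn].
  - assert (Hsub : forall x, chain Sg (Datatypes.S n) x -> chain Sg n x \/
       ((cons (fun y => chain Sg n y \/ y = a) /\ x = a) \/
       (~ cons (fun y => chain Sg n y \/ y = a) /\ x = TNeg a))).
    { intros x [Hx|[a' [Ha' Hx]]]; auto. rewrite <- Ha in Ha'. apply tcode_inj in Ha'. subst a'. auto. }
    destruct (classic (cons (fun y => chain Sg n y \/ y = a))) as [Hc|Hc].
    + intros Hd. apply Hc. eapply derives_mono; [|exact Hd].
      intros x Hx. destruct (Hsub x Hx) as [Hy|[[_ Hy]|[Hy _]]]; auto. contradiction.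
    + destruct (cons_step _ a IH) as [Hy|Hc']; [contradiction|].
      intros Hd. apply Hc'. eapply derives_mono; [|exact Hd].
      intros x Hx. destruct (Hsub x Hx) as [Hy|[[Hy _]|[_ Hy]]]; auto. contradiction.
  - intros Hd. apply IH. eapply derives_mono; [|exact Hd].
    intros x [Hx|[a' [Ha' _]]]; auto. exfalso; apply Hn; eauto.
Qed.

Lemma lindenbaum Sg : cons Sg -> exists D, MCS D /\ forall x, Sg x -> D x.
Proof.
  intros H0. exists (fun x => exists n, chain Sg n x). split; [split|].
  - intros [l [Hl Ht]].
    assert (HN : exists N, forall b, In b l -> chain Sg N b).
    { clear Ht. induction l as [|b l IH].
      - exists 0. intros ? [].
      - destruct IH as [N HN]. intros; apply Hl; right; auto.
        destruct (Hl b (or_introl eq_refl)) as [m Hm].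
        exists (max N m). intros c [<-|Hc].
        + eapply chain_mono; [|eauto]. lia.
        + eapply chain_mono; [|eauto]. lia. }
    destruct HN as [N HN]. apply (chain_cons Sg N H0). exists l. auto.
  - intros a. destruct (classic (cons (fun y => chain Sg (tcode a) y \/ y = a))) as [Hc|Hc].
    + left. exists (Datatypes.S (tcode a)). right. exists a. split; auto.
    + right. exists (Datatypes.S (tcode a)). right. exists a. split; auto.
  - intros x Hx. exists 0. auto.
Qed.
Lemma G_imp G ks c : MCS G -> (forall x, In x ks -> G x) -> thm (TImp (tbigand ks) c) -> G c.
Proof.
  intros HG Hks Ht. apply mcs_closed; auto.
  apply (derives_sem G (TImp (tbigand ks) c :: ks)).
  - intros b [<-|Hb]. apply thm_derives; auto. apply derives_in; auto.
  - intros v w Hv. specialize (Hv _ (or_introl eq_refl)) as H1. simpl in H1.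
    assert (teval v w (tbigand ks) = true) as E.
    { apply teval_tbigand. intros x Hx. apply Hv. right; auto. }
    rewrite E in H1. exact H1.
Qed.

Lemma G_mp G a b : MCS G -> G a -> thm (TImp a b) -> G b.
Proof.
  intros HG Ha Ht. apply mcs_closed; auto.
  apply (derives_sem G [a; TImp a b]).
  - intros c [<-|[<-|[]]]. apply derives_in; auto. apply thm_derives; auto.
  - intros v w Hv. specialize (Hv _ (or_introl eq_refl)) as H1.
    specialize (Hv _ (or_intror (or_introl eq_refl))). simpl in Hv. rewrite H1 in Hv. exact Hv.
Qed.

Lemma G_rck G p l c : MCS G -> (forall r, In r l -> G (TCond p r)) ->
  thm (TProp (PImp (pbigand l) c)) -> G (TCond p c).
Proof.
  intros HG Hl Ht. apply (G_imp G (map (fun x => TCond p x) l)); auto.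
  - intros x Hx. apply in_map_iff in Hx as [r [<- Hr]]. auto.
  - apply rule_rck; auto.
Qed.

Lemma G_lle G a b r : MCS G -> G (TCond (PNeg (PIff a b)) PBot) ->
  (G (TCond a r) <-> G (TCond b r)).
Proof.
  intros HG H. pose proof (G_mp G _ _ HG H (ax_lle a b r)) as H2.
  split; intros H3; apply mcs_closed; auto.
  - apply (derives_sem G [TIff (TCond a r) (TCond b r); TCond a r]).
    + intros c [<-|[<-|[]]]; apply derives_in; auto.
    + intros v w Hv. specialize (Hv _ (or_introl eq_refl)) as H1.
      specialize (Hv _ (or_intror (or_introl eq_refl))). simpl in *.
      rewrite Hv in H1. destruct (w (TCond b r)); auto.
  - apply (derives_sem G [TIff (TCond a r) (TCond b r); TCond b r]).
    + intros c [<-|[<-|[]]]; apply derives_in; auto.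
    + intros v w Hv. specialize (Hv _ (or_introl eq_refl)) as H1.
      specialize (Hv _ (or_intror (or_introl eq_refl))). simpl in *.
      rewrite Hv in H1. destruct (w (TCond a r)); auto.
Qed.
Definition lits (G : tform -> Prop) (x : tform) : Prop :=
  exists l, x = lit_form l /\ G x.

Lemma lits_same G D : MCS G -> MCS D -> (forall x, lits G x -> D x) -> same_cond G D.
Proof.
  intros HG HD H p q. split; intros H1.
  - apply H. exists (true, p, q). auto.
  - destruct (proj2 HG (TCond p q)) as [H2|H2]; auto. exfalso.
    apply (mcs_not_both D (TCond p q)); auto. apply H. exists (false, p, q). auto.
Qed.

Lemma partition G (Rr : pform -> Prop) (E : tform -> Prop) l :
  (forall b, In b l -> lits G b \/ (exists r, Rr r /\ b = TProp r) \/ E b) ->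
  exists ls R, (forall x, In x ls -> G (lit_form x)) /\ (forall r, In r R -> Rr r) /\
    (forall b, In b l -> In b (map lit_form ls) \/ In b (map TProp R) \/ E b).
Proof.
  induction l as [|b l IH]; intros H.
  - exists [], []. repeat split; intros ? [].
  - destruct IH as [ls [R [H1 [H2 H3]]]]. intros; apply H; right; auto.
    destruct (H b (or_introl eq_refl)) as [[x [-> Hx]]|[[r [Hr ->]]|Hb]].
    + exists (x :: ls), R. split; [|split]; auto.
      * intros y [<-|Hy]; auto.
      * intros c [<-|Hc]. left; left; auto. destruct (H3 c Hc) as [?|[?|?]]; simpl; auto.
    + exists ls, (r :: R). split; [|split]; auto.
      * intros y [<-|Hy]; auto.
      * intros c [<-|Hc]. right; left; left; auto. destruct (H3 c Hc) as [?|[?|?]]; simpl; auto.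
    + exists ls, R. split; [|split]; auto.
      intros c [<-|Hc]; auto.
Qed.

Lemma G_s5 G ls chi : MCS G -> (forall x, In x ls -> G (lit_form x)) ->
  thm (TImp (tbigand (map lit_form ls)) (TProp chi)) -> G (TCond (PNeg chi) PBot).
Proof.
  intros HG Hls Ht. apply (G_imp G (map lit_form ls)); auto.
  - intros x Hx. apply in_map_iff in Hx as [y [<- Hy]]. auto.
  - apply rule_s5f; auto.
Qed.

Definition nxt (i : idx3) : idx3 := match i with I0 => I1 | I1 => I2 | I2 => I0 end.

Theorem corollary2 (G : tform -> Prop) (d q : pform) :
  MCS G ->
  (G (TCond d q) <->
   forall (D : tform -> Prop) (p : pform) (i : idx3),
     in_max G (in_box G d) (D, p, i) -> D (TProp q)).
Proof.
  intros HG. split.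
  - intros Hdq D p i [Hbox Hm].
    assert (Hc : forall W, in_box G d (W, p, nxt i) -> likely G p D /\ W (TProp p)).
    { intros W HW. specialize (Hm _ HW). simpl in Hm.
      assert (H1 : (likely G p W /\ D (TProp p)) \/
           (nxt i = I1 /\ i = I0) \/ (nxt i = I2 /\ i = I1) \/ (nxt i = I0 /\ i = I2)).
      { right. destruct i; simpl; auto. }
      destruct (Hm H1) as [H|[[-> H]|[[-> H]|[-> H]]]]; auto; discriminate. }
    destruct Hbox as [[HD HDs] HDd].
    destruct (Hc D) as [Hlik _]. split; [split|]; auto.
    assert (Hall : forall W, MCS W -> same_cond G W -> W (TProp d) -> W (TProp p)).
    { intros W H1 H2 H3. apply (Hc W). split; [split|]; auto. }
    set (E := fun b => b = TProp d \/ b = TNeg (TProp p)).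
    assert (Hinc : ~ cons (fun b => lits G b \/ E b)).
    { intros Hcons. destruct (lindenbaum _ Hcons) as [W [HW HWs]].
      apply (mcs_not_both W (TProp p)); auto.
      - apply Hall; auto.
        + apply lits_same; auto.
        + apply HWs. right. left. auto.
      - apply HWs. right. right. auto. }
    apply NNPP in Hinc. destruct Hinc as [l [Hl Ht]].
    destruct (partition G (fun _ => False) E l) as [ls [R [H1 [H2 H3]]]].
    { intros b Hb. destruct (Hl b Hb); auto. }
    assert (Hs : G (TCond (PNeg (PIff d (PAnd p d))) PBot)).
    { apply (G_s5 G ls); auto. apply (thm_sem [imps l TBot]).
      - intros t [<-|[]]; auto.
      - intros v w Hv. specialize (Hv _ (or_introl eq_refl)). rewrite teval_imps in Hv.
        simpl. destruct (teval v w (tbigand (map lit_form ls))) eqn:Et; simpl; auto.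
        destruct (peval v d) eqn:Ed, (peval v p) eqn:Ep; simpl; auto.
        apply Hv. intros x Hx. destruct (H3 x Hx) as [Hx'|[Hx'|[-> | ->]]].
        + rewrite teval_tbigand in Et. auto.
        + apply in_map_iff in Hx' as [r [_ Hr]]. destruct (H2 r Hr).
        + simpl; auto.
        + simpl. rewrite Ep; auto. }
    pose proof (proj1 (G_lle G _ _ q HG Hs) Hdq) as H4.
    pose proof (G_mp G _ _ HG H4 (ax_exp q p d)) as H5.
    apply Hlik in H5.
    apply mcs_closed; auto. apply (derives_sem D [TProp (PImp d q); TProp d]).
    + intros c [<-|[<-|[]]]; apply derives_in; auto.
    + intros v w Hv. specialize (Hv _ (or_introl eq_refl)) as H6.
      specialize (Hv _ (or_intror (or_introl eq_refl))). simpl in *.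
      rewrite Hv in H6. exact H6.
  - intros H. destruct (classic (G (TCond d q))) as [Hq|Hq]; auto. exfalso.
    set (Rr := fun r => G (TCond d r)).
    set (E := fun b => b = TProp d \/ b = TNeg (TProp q)).
    assert (Hcons : cons (fun b => lits G b \/ (exists r, Rr r /\ b = TProp r) \/ E b)).
    { intros [l [Hl Ht]]. apply Hq.
      destruct (partition G Rr E l Hl) as [ls [R [H1 [H2 H3]]]].
      set (chi := PImp (pbigand R) (PImp d q)).
      assert (Hs : G (TCond (PNeg (PIff d (PAnd d chi))) PBot)).
      { apply (G_s5 G ls); auto. apply (thm_sem [imps l TBot]).
        - intros t [<-|[]]; auto.
        - intros v w Hv. specialize (Hv _ (or_introl eq_refl)). rewrite teval_imps in Hv.
          simpl. destruct (teval v w (tbigand (map lit_form ls))) eqn:Et; simpl; auto.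
          destruct (peval v d) eqn:Ed, (peval v (pbigand R)) eqn:ER, (peval v q) eqn:Eq;
            simpl; auto.
          apply Hv. intros x Hx. destruct (H3 x Hx) as [Hx'|[Hx'|[-> | ->]]].
          + rewrite teval_tbigand in Et. auto.
          + apply in_map_iff in Hx' as [r [<- Hr]]. simpl.
            rewrite peval_pbigand in ER. auto.
          + simpl; auto.
          + simpl. rewrite Eq; auto. }
      assert (H5 : G (TCond (PAnd d chi) chi)).
      { apply (G_rck G _ [PAnd d chi]); auto.
        - intros r [<-|[]]. apply mcs_closed; auto. apply thm_derives, ax_id.
        - apply ax_taut. intros v w. unfold chi; simpl. destruct (peval v d), (peval v (pbigand R)), (peval v q); reflexivity. }
      apply (proj2 (G_lle G _ _ chi HG Hs)) in H5.
      apply (G_rck G d (chi :: d :: R)); auto.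
      - intros r [<-|[<-|Hr]]; auto; [apply mcs_closed; auto; apply thm_derives, ax_id | apply (H2 r Hr)].
      - apply ax_taut. intros v w.
        change (implb (peval v (pbigand (chi :: d :: R))) (peval v q) = true).
        destruct (peval v (pbigand (chi :: d :: R))) eqn:Eb; [|reflexivity].
        rewrite peval_pbigand in Eb.
        assert (Hc : peval v chi = true) by (apply Eb; left; auto).
        assert (Hd : peval v d = true) by (apply Eb; right; left; auto).
        assert (HR : peval v (pbigand R) = true).
        { apply peval_pbigand. intros x Hx. apply Eb. right; right; auto. }
        unfold chi in Hc. simpl in Hc. rewrite HR, Hd in Hc. simpl in Hc. rewrite Hc. reflexivity. }
    destruct (lindenbaum _ Hcons) as [D [HD HDs]].
    assert (Hin : in_box G d (D, d, I0)).
    { split; [split|]; auto.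
      - apply lits_same; auto.
      - apply HDs. right. right. left. reflexivity. }
    apply (mcs_not_both D (TProp q)); auto.
    + apply (H D d I0). split; auto.
      intros [[W p'] j] [_ HWd] _. simpl. left. split; auto.
      intros r Hr. apply HDs. right. left. exists r. split; auto.
    + apply HDs. right. right. right. reflexivity.
Qed.
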